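(* Let $k\ge0$ be an integer and let $X_{0,k}\subseteq\{0,1\}^{\mathbb{Z}}$ be the $(0,k)$-RLL system, i.e., the set of binary bi-infinite sequences containing no $k+1$ consecutive zeros. Let $\mu^{\mathsf{u}}$ be the uniform Bernoulli i.i.d. measure on $\{0,1\}^{\mathbb{Z}}$. Then \[R_0(X_{0,k},\{0,1\}^{\mathbb{Z}},\mu^{\mathsf{u}})=\frac{1}{2(2^{k+1}-1)}.\]
   Context: For a shift space $X$, $\mathscr{B}_n(X)$ is the set of length-$n$ words appearing as consecutive subwords of elements of $X$. $d$ is the Hamming distance, $B_r(\overline{x})$ the Hamming ball. For $A,C\subseteq\Sigma^n$, a probability measure $\eta$ on $\Sigma^n$ and $\varepsilon>0$: $R_\varepsilon(C,A,\eta)=\min\{r\in\mathbb{Z}_{\ge0}:\eta(A\cap\bigcup_{\overline{x}\in C}B_r(\overline{x}))\ge1-\varepsilon\}$. For shift spaces $X,Y$ and a shift-invariant ergodic probability measure $\mu$ on $Y$ with marginal $\mu_n$ on coordinates $0,\dots,n-1$: $R_\varepsilon(X,Y,\mu)=\liminf_n\frac1nR_\varepsilon(\mathscr{B}_n(X),\mathscr{B}_n(Y),\mu_n)$ and $R_0(X,Y,\mu)=\lim_{\varepsilon\to0}R_\varepsilon(X,Y,\mu)$. *)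

(* Defs.v *)
From HB Require Import structures.
From mathcomp Require Import all_boot all_order all_algebra.
From mathcomp Require Import all_classical all_reals all_analysis.
Set Implicit Arguments. Unset Strict Implicit. Unset Printing Implicit Defensive.
Import Order.TTheory GRing.Theory Num.Theory.
Local Open Scope ring_scope.

Definition bseq := int -> bool.

Definition word (n : nat) := {ffun 'I_n -> bool}.

Definition lang (X : bseq -> Prop) (n : nat) : {set word n} :=
  [set w : word n | `[< exists x : bseq, X x /\
       exists i : int, forall j : 'I_n, w j = x (i + (nat_of_ord j)%:Z) >]].

Definition fullshift : bseq -> Prop := fun _ => True.

Definition rll0k (k : nat) : bseq -> Prop :=
  fun x => forall i : int, exists j : nat, (j <= k)%N /\ x (i + j%:Z) = true.

Definition hamming (n : nat) (u v : word n) : nat :=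
  \sum_(i < n) (u i != v i).

(* a probability measure on Sigma^n is given by its weights *)
Definition wmeas (R : realType) (n : nat) (eta : word n -> R) (S : {set word n}) : R :=
  \sum_(w in S) eta w.

(* R_eps(C, A, eta) = min { r >= 0 : eta(A cap U_{x in C} B_r(x)) >= 1 - eps }.
   Since Hamming distance is <= n, it suffices to search r in 0..n+1;
   [find] returns the least such r (or n+2 if none exists, which only happens
   when the set is empty, i.e. the min is undefined). *)
Definition Reps_fin (R : realType) (n : nat) (eps : R)
    (C A : {set word n}) (eta : word n -> R) : nat :=
  find (fun r : nat =>
          1 - eps <= wmeas eta (A :&: [set w | [exists c in C, (hamming c w <= r)%N]]))
       (iota 0 n.+2).

(* marginal on coordinates 0..n-1 of the uniform Bernoulli measure on {0,1}^Z *)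
Definition unif_marg (R : realType) (n : nat) : word n -> R :=
  fun _ => (2%:R ^+ n)^-1.

(* R_eps(X, Y, mu) = liminf_n (1/n) R_eps(B_n(X), B_n(Y), mu_n),
   mu given by its family of marginals mu_n *)
Definition Reps (R : realType) (eps : R) (X Y : bseq -> Prop)
    (mu : forall n : nat, word n -> R) : \bar R :=
  limn_einf (fun n : nat =>
     ((Reps_fin eps (lang X n) (lang Y n) (mu n))%:R / n%:R)%:E).

(* Main.v *)
Set Warnings "-notation-overridden,-ambiguous-paths,-notation-incompatible-prefix".
Require Import Defs.
From HB Require Import structures.
From mathcomp Require Import all_boot all_order all_algebra.
From mathcomp Require Import all_classical all_reals all_analysis.
From mathcomp Require Import zify ring lra.
Import Order.TTheory GRing.Theory Num.Theory.
Import numFieldNormedType.Exports.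
Local Open Scope ring_scope.
Set Implicit Arguments. Unset Strict Implicit.

Definition step (k : nat) (p : nat * nat) (b : bool) : nat * nat :=
  if b then (0%N, p.2) else if p.1 == k then (0%N, p.2.+1) else (p.1.+1, p.2).

Fixpoint run (k : nat) (g : nat -> bool) (m : nat) : nat * nat :=
  match m with 0 => (0%N, 0%N) | m'.+1 => step k (run k g m') (g m') end.

Lemma run_t_le k g m : ((run k g m).1 <= k)%N.
Proof.
elim: m => [|m IH] //=; rewrite /step.
case: (g m) => //; case: eqP => //= ?; lia.
Qed.

Lemma run_f_le k g m : ((run k g m).2 <= m)%N.
Proof.
elim: m => [|m IH] //=; rewrite /step.
case: (g m) => /=; first lia. case: eqP => /= _; lia.
Qed.

Lemma run_ext k g g' m : (forall j, (j < m)%N -> g j = g' j) -> run k g m = run k g' m.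
Proof.
elim: m => [|m IH] H //=.
rewrite IH ?H //; move=> j hj; apply: H; lia.
Qed.

Lemma run_count k g m :
  (run k g m).2 = (\sum_(i < m) (~~ g i && ((run k g i).1 == k)))%N.
Proof.
elim: m => [|m IH]; first by rewrite big_ord0.
rewrite big_ord_recr /= -IH /step.
case: (g m) => /=; first lia.
case: eqP => /= _; lia.
Qed.

Definition get (n : nat) (w : word n) (i : nat) : bool :=
  if (insub i : option 'I_n) is Some j then w j else false.
Arguments get {n}.

Lemma getE n (w : word n) (j : 'I_n) : get w j = w j.
Proof. by rewrite /get valK. Qed.

Lemma get_out n (w : word n) i : (n <= i)%N -> get w i = false.
Proof. by move=> h; rewrite /get insubF // ltnNge h. Qed.

Definition fcount (k n : nat) (w : word n) : nat := (run k (get w) n).2.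
Arguments fcount k {n}.

Definition cfix (k n : nat) (w : word n) : word n :=
  [ffun j : 'I_n => w j || ((run k (get w) j).1 == k)].

Lemma get_cfix k n (w : word n) i : (i < n)%N ->
  get (cfix k w) i = get w i || ((run k (get w) i).1 == k).
Proof.
move=> h; have -> : i = val (Ordinal h) by [].
by rewrite !getE ffunE.
Qed.

Lemma hamming_cfix k n (w : word n) : hamming (cfix k w) w = fcount k w.
Proof.
rewrite /hamming /fcount run_count; apply: eq_bigr => i _.
rewrite ffunE getE; by case: (w i); case: (_ == k).
Qed.

Lemma cfix_grow k n (w : word n) m i :
  (forall j, (j <= i)%N -> (m + j < n)%N /\ get (cfix k w) (m + j) = false) ->
  (i <= (run k (get w) (m + i)).1)%N.
Proof.
elim: i => [|i IH] H //.
have [h1 h2] := H i (leqnSn i).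
rewrite get_cfix // in h2.
move/norP: h2 => [/negbTE g0 /negbTE tk].
rewrite addnS /= /step g0 tk /=.
have := IH (fun j hj => H j (leqW hj)); lia.
Qed.

Lemma cfix_valid k n (w : word n) m :
  ~ (forall j, (j <= k)%N -> (m + j < n)%N /\ get (cfix k w) (m + j) = false).
Proof.
move=> H; have := cfix_grow H; have := run_t_le k (get w) (m + k).
have [h1 h2] := H k (leqnn k).
rewrite get_cfix // in h2; move/norP: h2 => [_ /negbTE tk].
move: tk; case: eqP => // hne _ a b; apply: hne; lia.
Qed.

Lemma cfix_lang k n (w : word n) : cfix k w \in lang (rll0k k) n.
Proof.
rewrite inE; apply/asboolP.
pose x := fun z : int => match z with Posz m => if (m < n)%N then get (cfix k w) m else true | Negz _ => true end.
exists x; split; last first.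
  exists 0 => j; rewrite add0r /x /= ltn_ord getE //.
move=> [m|p]; last by exists 0%N; split => //; rewrite addr0.
apply: contrapT => hno; apply: (@cfix_valid k n w m) => j hj.
have : x (Posz m + Posz j) <> true by move=> e; apply: hno; exists j.
rewrite -PoszD /x; case: ltnP => // hlt hf; split => //; by case: (get _ _) hf.
Qed.

Fixpoint lrun (g : nat -> bool) (m : nat) : nat :=
  match m with 0 => 0%N | m'.+1 => if g m' then 0%N else (lrun g m').+1 end.

Lemma lrun_le g m : (lrun g m <= m)%N.
Proof. elim: m => //= m IH; case: (g m) => //. Qed.

Lemma lrun_back g m j : (j < lrun g m)%N -> g (m - j.+1)%N = false.
Proof.
elim: m j => [|m IH] j //=.
case E: (g m) => // hj.
case: j hj => [|j] hj; first by rewrite subn1 /= E.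
rewrite subSS; apply: IH; lia.
Qed.

Lemma lang_valid k n (c : word n) m : c \in lang (rll0k k) n -> (m <= n)%N ->
  (lrun (get c) m <= k)%N.
Proof.
rewrite inE => /asboolP [x [hx [i0 hc]]] hm.
rewrite leqNgt; apply/negP => hl.
have hml := lrun_le (get c) m.
have [j [hj hxj]] := hx (i0 + (m - k.+1)%N%:Z).
have hp : (m - (k - j).+1 < n)%N by lia.
have := lrun_back (j:=(k - j)%N) (g:=get c) (m:=m).
have -> : (m - (k - j).+1)%N = val (Ordinal hp) by [].
rewrite getE hc /=.
rewrite -addrA -PoszD in hxj.
have -> : (m - (k - j).+1)%N = (m - k.+1 + j)%N by lia.
rewrite hxj => h; have := h ltac:(lia); done.
Qed.

Lemma lower_inv k n (w c : word n) m : c \in lang (rll0k k) n -> (m <= n)%N ->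
  ((run k (get w) m).2 + (lrun (get c) m < (run k (get w) m).1)%N <=
   \sum_(i < m) (get c i != get w i))%N.
Proof.
move=> hc; elim: m => [|m IH] hm; first by rewrite big_ord0.
rewrite big_ord_recr /=.
have := IH (ltnW hm); have := lang_valid (m:=m.+1) hc hm.
have := run_t_le k (get w) m.
rewrite /= /step.
case: (run k (get w) m) => t f /=.
case: (get w m); case: (get c m) => /=; try lia;
case: eqP => /= ?; lia.
Qed.

Lemma lower_bound k n (w c : word n) : c \in lang (rll0k k) n ->
  (fcount k w <= hamming c w)%N.
Proof.
move=> hc; have := lower_inv w hc (leqnn n).
have -> : (\sum_(i < n) (get c i != get w i))%N = hamming c w.
  by apply: eq_bigr => i _; rewrite !getE.
rewrite /fcount; lia.
Qed.

Lemma lang_full n : lang fullshift n = [set: word n]%SET.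
Proof.
apply/setP => w; rewrite !inE; apply/asboolP.
exists (fun z : int => match z with Posz m => get w m | Negz _ => false end).
split => //; exists 0 => j; by rewrite add0r getE.
Qed.

Lemma set_eq k n r :
  lang fullshift n :&: [set w | [exists c in lang (rll0k k) n, (hamming c w <= r)%N]]
  = [set w : word n | (fcount k w <= r)%N].
Proof.
rewrite lang_full finset.setTI; apply/setP => w; rewrite !inE.
apply/existsP/idP.
- by move=> [c /andP [hc hh]]; apply: leq_trans (lower_bound w hc) hh.
- by move=> h; exists (cfix k w); rewrite cfix_lang hamming_cfix.
Qed.

Lemma card_word n : #|word n| = (2 ^ n)%N.
Proof. by rewrite card_ffun card_bool card_ord. Qed.

Lemma Reps_fin_eq (R : realType) (eps : R) k n :
  Reps_fin eps (lang (rll0k k) n) (lang fullshift n) (@unif_marg R n) =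
  find (fun r : nat => 1 - eps <= #|[set w : word n | (fcount k w <= r)%N]|%:R / 2 ^+ n)
    (iota 0 n.+2).
Proof.
rewrite /Reps_fin; apply: eq_find => r /=.
rewrite set_eq /wmeas /unif_marg sumr_const.
have E : forall (x : R) m, x *+ m = m%:R * x by move=> x m; rewrite mulr_natl.
by rewrite E mulrC.
Qed.

Definition AA (R : realType) (k : nat) : R := 2 ^+ k.+1 - 1.

Definition Zf (R : realType) (k n : nat) (w : word n) (m : nat) : R :=
  2 * AA R k * (run k (get w) m).2%:R + 2 ^+ (run k (get w) m).1.+1 - 2 - m%:R.

Definition dd (R : realType) (t : nat) (b : bool) : R :=
  if b then 1 - 2 ^+ t.+1 else 2 ^+ t.+1 - 1.

Lemma Z_step (R : realType) k n (w : word n) m :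
  Zf R k w m.+1 = Zf R k w m + dd R (run k (get w) m).1 (get w m).
Proof.
rewrite /Zf /= /step /dd /AA.
case: (run k (get w) m) => t f /=.
case: (get w m) => /=; first by rewrite -natr1 expr1; ring.
case: eqP => [->|_] /=; rewrite -!natr1 ?exprS; ring.
Qed.

Lemma dd_sq (R : realType) k t b : (t <= k)%N -> dd R t b ^+ 2 <= AA R k ^+ 2.
Proof.
move=> htk.
have h1 : (1 : R) <= 2 ^+ t.+1 by apply: exprn_ege1; lra.
have h2 : (2 : R) ^+ t.+1 <= 2 ^+ k.+1 by apply: ler_weXn2l => //; lra.
rewrite /dd /AA; case: b; nra.
Qed.

Definition flipw n m (w : word n) : word n :=
  [ffun j : 'I_n => if val j == m then ~~ w j else w j].

Lemma flipwK n m : involutive (@flipw n m).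
Proof.
move=> w; apply/ffunP => j; rewrite !ffunE.
by case: eqP => _ //; rewrite negbK.
Qed.

Lemma get_flip_lt n m (w : word n) j : (j < m)%N -> get (flipw m w) j = get w j.
Proof.
move=> hj; case: (ltnP j n) => hn; last by rewrite !get_out.
have -> : j = val (Ordinal hn) by [].
rewrite !getE ffunE /=; case: eqP => // e; lia.
Qed.

Lemma get_flip_eq n m (w : word n) : (m < n)%N -> get (flipw m w) m = ~~ get w m.
Proof.
move=> hn; have -> : m = val (Ordinal hn) by [].
by rewrite !getE ffunE /= eqxx.
Qed.

Lemma cross (R : realType) k n m : (m < n)%N ->
  \sum_(w : word n) Zf R k w m * dd R (run k (get w) m).1 (get w m) = 0.
Proof.
move=> hmn.
set G := fun w : word n => Zf R k w m * dd R (run k (get w) m).1 (get w m).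
have HG : forall w, G (flipw m w) = - G w.
  move=> w; rewrite /G /Zf.
  have -> : run k (get (flipw m w)) m = run k (get w) m.
    by apply: run_ext => j hj; rewrite get_flip_lt.
  rewrite get_flip_eq // /dd; case: (get w m) => /=; ring.
have H1 := reindex_inj (op := +%R) (x := 0) (P := xpredT) (F := G) (inv_inj (@flipwK n m)).
have H2 : \sum_(j : word n) G (flipw m j) = \sum_(j : word n) - G j.
  by apply: eq_bigr => j _; exact: HG.
rewrite H2 in H1.
rewrite sumrN in H1.
have -> : \sum_(w : word n) Zf R k w m * dd R (run k (get w) m).1 (get w m) = \sum_(w : word n) G w by [].
lra.
Qed.

Lemma moment (R : realType) k n m : (m <= n)%N ->
  \sum_(w : word n) Zf R k w m ^+ 2 <= m%:R * AA R k ^+ 2 * 2 ^+ n.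
Proof.
elim: m => [|m IH] hm.
  rewrite big1 ?mul0r // => w _; rewrite /Zf /= expr1 mulr0 add0r subrr sub0r oppr0.
  by rewrite expr0n.
under eq_bigr => w _ do rewrite Z_step.
have e : forall (a b : R), (a + b) ^+ 2 = a ^+ 2 + 2 * (a * b) + b ^+ 2.
  by move=> a b; ring.
rewrite (eq_bigr _ (fun w _ => e _ _)) !big_split /= -mulr_sumr cross // mulr0 addr0.
have hd : \sum_(w : word n) dd R (run k (get w) m).1 (get w m) ^+ 2 <= \sum_(w : word n) AA R k ^+ 2.
  by apply: ler_sum => w _; apply: dd_sq; apply: run_t_le.
rewrite sumr_const card_word in hd.
have E : forall (x : R) p, x *+ p = p%:R * x by move=> x p; rewrite mulr_natl.
rewrite E natrX in hd.
have := IH (ltnW hm).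
rewrite -natr1. lra.
Qed.

Lemma AA_ge1 (R : realType) k : 1 <= AA R k.
Proof.
rewrite /AA; have : (2 : R) <= 2 ^+ k.+1 by rewrite exprS; have := exprn_ege1 k (x:=(2:R)) ltac:(lra); nra.
lra.
Qed.

Lemma cheb (R : realType) k n (lam : R) : 0 < lam ->
  #|[set w : word n | lam <= `|Zf R k w n|]|%:R * lam ^+ 2 <= n%:R * AA R k ^+ 2 * 2 ^+ n.
Proof.
move=> hl; apply: le_trans (moment R k (leqnn n)).
rewrite (bigID (mem [set w : word n | lam <= `|Zf R k w n|])) /=.
have h0 : 0 <= \sum_(i | ~~ (i \in [set w : word n | lam <= `|Zf R k w n|])) Zf R k i n ^+ 2.
  by apply: sumr_ge0 => i _; apply: sqr_ge0.
suff : #|[set w : word n | lam <= `|Zf R k w n|]|%:R * lam ^+ 2 <=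
   \sum_(i | i \in [set w : word n | lam <= `|Zf R k w n|]) Zf R k i n ^+ 2 by lra.
have -> : #|[set w : word n | lam <= `|Zf R k w n|]|%:R * lam ^+ 2 =
   \sum_(i | i \in [set w : word n | lam <= `|Zf R k w n|]) lam ^+ 2.
  by rewrite sumr_const mulr_natl.
apply: ler_sum => w; rewrite inE => hw.
rewrite -[Zf R k w n ^+ 2]real_normK ?num_real // !expr2; apply: ler_pM => //; lra.
Qed.

Lemma f_Z (R : realType) k n (w : word n) :
  `|(fcount k w)%:R - n%:R * (2 * AA R k)^-1| <= `|Zf R k w n| * (2 * AA R k)^-1 + 1.
Proof.
have hA := AA_ge1 R k.
set c := (2 * AA R k)^-1.
have hc : 0 < c by rewrite /c invr_gt0; lra.
have h2c : c * (2 * AA R k) = 1 by rewrite /c mulVf //; lra.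
have ht := run_t_le k (get w) n.
set e : R := 2 ^+ (run k (get w) n).1.+1 - 2.
have he0 : 0 <= e.
  rewrite /e exprS; have := exprn_ege1 (run k (get w) n).1 (x:=(2:R)) ltac:(lra); nra.
have he1 : e <= 2 * AA R k.
  rewrite /e /AA; have : (2 : R) ^+ (run k (get w) n).1.+1 <= 2 ^+ k.+1.
    by apply: ler_weXn2l => //; lra.
  have := exprn_ege1 k.+1 (x:=(2:R)) ltac:(lra); lra.
have hZ : Zf R k w n = 2 * AA R k * (fcount k w)%:R + e - n%:R by rewrite /Zf /e /fcount; ring.
clearbody e.
have hx : (fcount k w)%:R - n%:R * c = Zf R k w n * c - e * c.
  rewrite hZ; have : (2 * AA R k * (fcount k w)%:R) * c = (fcount k w)%:R.
    by rewrite mulrC mulrA h2c mul1r.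
  move=> h; rewrite !mulrBl mulrDl h; lra.
have hec : e * c <= 1 by rewrite -h2c mulrC ler_pM2l.
have hec0 : 0 <= e * c by apply: mulr_ge0 => //; lra.
have z1 : Zf R k w n * c <= `|Zf R k w n| * c by rewrite ler_pM2r // ler_norm.
have z2 : - (`|Zf R k w n| * c) <= Zf R k w n * c.
  rewrite -mulNr ler_pM2r //; have := ler_norm (- Zf R k w n); rewrite normrN; lra.
rewrite hx ler_norml; apply/andP; split; lra.
Qed.

Lemma cheb2 (R : realType) k n (del : R) : 0 < del -> (0 < n)%N -> 2 <= del * n%:R ->
  #|[set w : word n | del * n%:R <= `|(fcount k w)%:R - n%:R * (2 * AA R k)^-1|]|%:R
    <= 2 ^+ n / (del ^+ 2 * n%:R).
Proof.
move=> hd hn h2.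
have hA := AA_ge1 R k.
have hnr : 0 < (n%:R : R) by rewrite ltr0n.
set S := [set w : word n | _ <= _].
set S' := [set w : word n | AA R k * del * n%:R <= `|Zf R k w n|].
have hsub : S \subset S'.
  apply/fintype.subsetP => w; rewrite !inE => hw.
  have fz := f_Z R k w.
  set c := (2 * AA R k)^-1 in fz.
  have hc : 0 < c by rewrite /c invr_gt0; lra.
  have h2c : c * (2 * AA R k) = 1 by rewrite /c mulVf //; lra.
  have hzc : `|Zf R k w n| = (`|Zf R k w n| * c) * (2 * AA R k) by rewrite -mulrA h2c mulr1.
  rewrite hzc; nra.
have hcard : (#|S|%:R : R) <= #|S'|%:R by rewrite ler_nat; apply: subset_leq_card.
have hch := @cheb R k n (AA R k * del * n%:R) ltac:(apply: mulr_gt0 => //; apply: mulr_gt0 => //; lra).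
rewrite -/S' in hch.
have hpos : 0 < del ^+ 2 * n%:R by apply: mulr_gt0 => //; apply: exprn_gt0.
rewrite ler_pdivlMr //.
have hnA : 0 < n%:R * AA R k ^+ 2 by apply: mulr_gt0 => //; apply: exprn_gt0; lra.
suff : #|S'|%:R * (del ^+ 2 * n%:R) <= 2 ^+ n.
  have : 0 <= del ^+ 2 * n%:R by lra.
  move=> h0 h1; apply: le_trans h1; by rewrite ler_pM2r.
rewrite -(ler_pM2l hnA).
have -> : n%:R * AA R k ^+ 2 * (#|S'|%:R * (del ^+ 2 * n%:R)) = #|S'|%:R * (AA R k * del * n%:R) ^+ 2 by ring.
exact: hch.
Qed.

Lemma frac_le (R : realType) k n (del : R) r : 0 < del -> (0 < n)%N -> 2 <= del * n%:R ->
  r%:R < ((2 * AA R k)^-1 - del) * n%:R ->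
  #|[set w : word n | (fcount k w <= r)%N]|%:R <= 2 ^+ n / (del ^+ 2 * n%:R).
Proof.
move=> hd hn h2 hr; apply: le_trans (cheb2 k hd hn h2).
rewrite ler_nat; apply: subset_leq_card; apply/fintype.subsetP => w; rewrite !inE => hw.
have hf : ((fcount k w)%:R : R) <= r%:R by rewrite ler_nat.
have := ler_norm (- ((fcount k w)%:R - n%:R * (2 * AA R k)^-1)); rewrite normrN.
lra.
Qed.

Lemma frac_ge (R : realType) k n (del : R) r : 0 < del -> (0 < n)%N -> 2 <= del * n%:R ->
  ((2 * AA R k)^-1 + del) * n%:R <= r%:R ->
  2 ^+ n - 2 ^+ n / (del ^+ 2 * n%:R) <= #|[set w : word n | (fcount k w <= r)%N]|%:R.
Proof.
move=> hd hn h2 hr.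
have hC := cardsC [set w : word n | (fcount k w <= r)%N].
rewrite card_word in hC.
have hC' := congr1 (fun x => x%:R : R) hC; rewrite /= natrD natrX in hC'.
have hs := cheb2 k hd hn h2.
have hsub : (#|~: [set w : word n | (fcount k w <= r)%N]|%:R : R) <=
    #|[set w : word n | del * n%:R <= `|(fcount k w)%:R - n%:R * (2 * AA R k)^-1|]|%:R.
  rewrite ler_nat; apply: subset_leq_card; apply/fintype.subsetP => w; rewrite !inE -ltnNge => hw.
  have hf : (r%:R : R) + 1 <= (fcount k w)%:R by rewrite natr1 ler_nat.
  have := ler_norm ((fcount k w)%:R - n%:R * (2 * AA R k)^-1).
  have e : ((2 * AA R k)^-1 + del) * n%:R = n%:R * (2 * AA R k)^-1 + del * n%:R by ring.
  rewrite e in hr.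
  move: hr hf; set c := (2 * AA R k)^-1; set F := (fcount k w)%:R; set N : R := n%:R; set rr : R := r%:R.
  move=> h1 h3 h4. clear -h1 h3 h4 hd. have h5 : rr <= F - 1 by lra. have h6 : del * N <= F - N * c by lra. lra.
lra.
Qed.

Lemma rn_bounds (R : realType) k n (eps del : R) : 0 < eps -> eps < 1 -> 0 < del -> (0 < n)%N ->
  2 <= del * n%:R -> (del ^+ 2 * n%:R)^-1 <= eps -> (del ^+ 2 * n%:R)^-1 < 1 - eps ->
  ((2 * AA R k)^-1 - del) * n%:R <=
     (Reps_fin eps (lang (rll0k k) n) (lang fullshift n) (@unif_marg R n))%:R /\
  (Reps_fin eps (lang (rll0k k) n) (lang fullshift n) (@unif_marg R n))%:R <=
     ((2 * AA R k)^-1 + del) * n%:R + 1.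
Proof.
move=> he0 he1 hd hn h2 hq1 hq2.
rewrite Reps_fin_eq.
set P := (fun r : nat => _).
have hN : (0 : R) < 2 ^+ n by apply: exprn_gt0; lra.
have hPn : P n.
  rewrite /P.
  have -> : [set w : word n | (fcount k w <= n)%N] = [set: word n]%SET.
    by apply/setP => w; rewrite !inE /fcount run_f_le.
  rewrite cardsT card_word natrX divff; first lra.
  by apply: lt0r_neq0.
have hhas : has P (iota 0 n.+2).
  by apply/hasP; exists n => //; rewrite mem_iota /=; lia.
have hlt := hhas; rewrite has_find size_iota in hlt.
set fr := find P (iota 0 n.+2) in hlt *.
have Pfr : P fr.
  by have := nth_find 0 hhas; rewrite -/fr nth_iota.
have bef : forall r', (r' < fr)%N -> ~~ P r'.
  move=> r' hr'; have := before_find 0 hr'; rewrite nth_iota /=; last lia.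
  by move=> ->.
set q := (del ^+ 2 * n%:R)^-1 in hq1 hq2.
have hq0 : 0 <= q by rewrite /q invr_ge0; apply: mulr_ge0; [apply: sqr_ge0 | apply: ler0n].
split.
  rewrite leNgt; apply/negP => hlow.
  have hf := frac_le hd hn h2 hlow.
  move: Pfr; rewrite /P ler_pdivlMr // => Pfr.
  have : 2 ^+ n * q < 2 ^+ n * (1 - eps) by rewrite ltr_pM2l.
  rewrite -/q in hf => h; clear -Pfr hf h; lra.
rewrite leNgt; apply/negP => hup.
have hfr : (0 < fr)%N.
  rewrite lt0n; apply/negP => /eqP h0; move: hup; rewrite h0.
  have : 0 <= ((2 * AA R k)^-1 + del) * n%:R.
    apply: mulr_ge0; last by apply: ler0n.
    have := AA_ge1 R k => hA.
    have : 0 < (2 * AA R k)^-1 by rewrite invr_gt0; lra.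
    lra.
  lra.
have hr1 : ((2 * AA R k)^-1 + del) * n%:R <= fr.-1%:R.
  have : (fr.-1%:R : R) + 1 = fr%:R by rewrite natr1 prednK.
  lra.
have hg := frac_ge hd hn h2 hr1.
have := bef fr.-1 ltac:(lia).
rewrite /P -ltNge ltr_pdivrMr // => hnp.
have : 2 ^+ n * q <= 2 ^+ n * eps by rewrite ler_pM2l.
rewrite -/q in hg => h; clear -hnp hg h; lra.
Qed.

Local Open Scope classical_set_scope.

Lemma ev_gt (R : realType) (K : R) : \forall n \near \oo, K < n%:R.
Proof.
apply: filterS (nbhs_infty_gt (Num.truncn K)) => n hn.
apply: lt_le_trans (truncnS_gt K) _; by rewrite ler_nat.
Qed.

Lemma Reps_const (R : realType) k (eps : R) : 0 < eps -> eps < 1 ->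
  Reps eps (rll0k k) fullshift (@unif_marg R) = ((2 * AA R k)^-1)%:E.
Proof.
move=> he0 he1; rewrite /Reps.
suff H : (fun n : nat => ((Reps_fin eps (lang (rll0k k) n) (lang fullshift n) (@unif_marg R n))%:R / n%:R)%:E)
   @ \oo --> ((2 * AA R k)^-1)%:E.
  by have [-> _] := cvg_limn_einf_sup H.
apply: cvg_EFin; first by near=> n.
apply/cvgrPdist_le => d hd.
set c := (2 * AA R k)^-1.
set del := d / 2.
have hdel : 0 < del by rewrite /del divr_gt0.
have hdd : d = del + del by rewrite /del -splitr.
have he' : 0 < 1 - eps by lra.
near=> n.
have h1 : 2 / del < n%:R by near: n; apply: ev_gt.
have h2 : 1 / (del ^+ 2 * eps) < n%:R by near: n; apply: ev_gt.
have h3 : 1 / (del ^+ 2 * (1 - eps)) < n%:R by near: n; apply: ev_gt.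
have hd2 : 0 < del ^+ 2 by apply: exprn_gt0.
have hnR : 0 < (n%:R : R).
  apply: le_lt_trans h1; apply: divr_ge0; lra.
have hn : (0 < n)%N by rewrite -(ltr0n R).
rewrite ltr_pdivrMr // in h1.
rewrite ltr_pdivrMr ?mulr_gt0 // in h2.
rewrite ltr_pdivrMr ?mulr_gt0 // in h3.
have hdn : 0 < del ^+ 2 * n%:R by apply: mulr_gt0.
have [hl hu] := rn_bounds k he0 he1 hdel hn ltac:(lra)
  ltac:(rewrite -div1r ler_pdivrMr //; nra) ltac:(rewrite -div1r ltr_pdivrMr //; nra).
rewrite /= ler_norml; apply/andP; split.
  suff : (Reps_fin eps (lang (rll0k k) n) (lang fullshift n) (unif_marg R (n:=n)))%:R / n%:R <= c + d by lra.
  rewrite ler_pdivrMr //.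
  rewrite -/c in hu.
  have e : (c + d) * n%:R = (c + del) * n%:R + del * n%:R by rewrite hdd; ring.
  rewrite e; lra.
suff : c - d <= (Reps_fin eps (lang (rll0k k) n) (lang fullshift n) (unif_marg R (n:=n)))%:R / n%:R by lra.
rewrite ler_pdivlMr //.
rewrite -/c in hl.
have e : (c - d) * n%:R = (c - del) * n%:R - del * n%:R by rewrite hdd; ring.
rewrite e; have : 0 <= del * n%:R by apply: mulr_ge0; lra.
lra.
Unshelve. all: by end_near.
Qed.


Unset Implicit Arguments.

Theorem theorem19 (R : realType) (k : nat) :
  Reps x (rll0k k) fullshift (@unif_marg R) @[x --> (0 : R)^'+] --> ((2 * (2 ^+ k.+1 - 1))^-1 : R)%:E.
Proof.
apply: cvg_near_cst.
near=> x.
apply: Reps_const.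
  by near: x; apply: nbhs_right_gt.
by near: x; apply: nbhs_right_lt; apply: ltr01.
Unshelve. all: by end_near.
Qed.
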